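(* Let $k,n,m$ be positive integers and let $s$ be an even integer with $2\le s\le m$. Let $L_\downarrow=\{5,6,\dots,\tfrac{3}{2}s+4\}$ and $L_\uparrow=\{\tfrac{3}{2}m+4kn+5,\dots,\tfrac{3}{2}m+4kn+\tfrac{3}{2}s+4\}$. Let $\mathcal{C}$ be the temporal graph whose vertex set consists of $3s$ vertices $a_1,a_2,\dots,a_{3s}$ arranged on a cycle, and whose time edges are $(\{a_p,a_{p+1}\},t)$ for all $p\in\{1,\dots,3s\}$ (indices modulo $3s$) and all $t\in L_\downarrow\cup L_\uparrow$, with maximum label $T=3m+4kn+4$. Then $\mathcal{C}$ admits a strict temporal spanner with $6s-3$ time edges, and $\mathcal{C}$ admits no strict temporal spanner with fewer than $6s-3$ time edges.
   Context: A temporal graph is a triple $(V,\mathcal{E},T)$ with time edges $\mathcal{E}\subseteq\binom{V}{2}\times\{1,\dots,T\}$. A strict temporal path is a sequence of time edges $(e_1,t_1),\dots,(e_r,t_r)\in\mathcal{E}$ such that $e_1,\dots,e_r$ form a static path and $t_1<\dots<t_r$. A temporal graph is strictly temporally connected if every vertex has a strict temporal path to every other vertex. A strict temporal spanner of a strictly temporally connected $(V,\mathcal{E},T)$ is a strictly temporally connected $(V,\mathcal{E}',T')$ with $\mathcal{E}'\subseteq\mathcal{E}$ and $T'\le T$; its size is $|\mathcal{E}'|$. (In the paper, this cycle is the edge selection gadget built for a pair of color classes with $s$ edges between them, where $m$ is the maximum such number of edges, $k$ the number of colors and $n$ the size of each color class.) *)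

(* Defs.v *)
From mathcomp Require Import all_boot.
Set Implicit Arguments. Unset Strict Implicit. Unset Printing Implicit Defensive.

(* A set of time edges over vertex type V with labels in {0..T}
   (type 'I_T.+1); a time edge is (e, t) with e a set of vertices
   (in the graphs below always a 2-element set) and t its label. *)
Notation time_edges V T := {set {set V} * 'I_T.+1}.

Definition strict_temporal_path (V : finType) (T : nat) (E : time_edges V T)
    (u v : V) : Prop :=
  exists (vs : seq V) (ts : seq 'I_T.+1),
    [/\ size ts = size vs,
        uniq (u :: vs),
        last u vs = v,
        sorted ltn (map (@nat_of_ord _) ts)
      & forall i, i < size vs ->
          ([set nth u (u :: vs) i; nth u vs i], nth ord0 ts i) \in E].

Definition strictly_temporally_connected (V : finType) (T : nat)
    (E : time_edges V T) : Prop :=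
  forall u v : V, u != v -> strict_temporal_path E u v.

(* A strict temporal spanner of E (of size #|E'|): a strictly temporally
   connected subset E' of the time edges.  (The bound T' <= T of the paper
   is automatically satisfied by taking T' = T, and any T' <= T merely
   restricts the admissible E'.) *)
Definition strict_temporal_spanner (V : finType) (T : nat)
    (E E' : time_edges V T) : Prop :=
  E' \subset E /\ strictly_temporally_connected E'.

Definition cyc_succ (N : nat) (p : 'I_N) : 'I_N :=
  Ordinal (ltn_pmod p.+1 (leq_ltn_trans (leq0n p) (ltn_ord p))).

Definition in_Ldown (s t : nat) : bool := (5 <= t) && (t <= 3 * s %/ 2 + 4).
Definition in_Lup (k n m s t : nat) : bool :=
  (3 * m %/ 2 + 4 * k * n + 5 <= t) && (t <= 3 * m %/ 2 + 4 * k * n + 3 * s %/ 2 + 4).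

Definition cycT (k n m : nat) : nat := 3 * m + 4 * k * n + 4.

(* The cycle gadget C on vertices a_0, ..., a_(3s-1) (= 'I_(3*s)). *)
Definition cycleE (k n m s : nat) : time_edges 'I_(3 * s) (cycT k n m) :=
  [set et : {set 'I_(3 * s)} * 'I_(cycT k n m).+1 |
     [exists p : 'I_(3 * s), et.1 == [set p; cyc_succ p]]
     && (in_Ldown s et.2 || in_Lup k n m s et.2)].

(* Main.v *)
Require Import Defs.
From mathcomp Require Import all_boot zify.
Set Implicit Arguments. Unset Strict Implicit. Unset Printing Implicit Defensive.

Fixpoint feas (t : nat) (l : seq (seq nat)) : bool :=
  if l is Q :: l' then has (fun x => (t < x) && feas x l') Q else true.

Definition conn (ls : seq (seq nat)) := forall r d, 0 < d < size ls ->
  feas 0 (take d (rot r ls)) || feas 0 (rev (drop d (rot r ls))).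

Lemma feas_anti l t1 t2 : t1 <= t2 -> feas t2 l -> feas t1 l.
Proof.
case: l => [//|Q l] /= le12 /hasP [x xS /andP [lt fx]].
by apply/hasP; exists x => //; rewrite fx (leq_ltn_trans le12 lt).
Qed.

Lemma feas_rem x Q y t : feas t (x ++ Q :: y) -> feas t (x ++ y).
Proof.
elim: x t => [|a x IH] t /=.
  by case/hasP => z _ /andP [lt fz]; apply: feas_anti fz; exact: ltnW.
case/hasP => z za /andP [lt fz]; apply/hasP; exists z => //.
by rewrite lt IH.
Qed.

Lemma feas_nil x y t : feas t (x ++ [::] :: y) = false.
Proof.
elim: x t => [|a x IH] t //=.
by apply/negbTE/hasPn => z _; rewrite IH andbF.
Qed.

Lemma conn_rot ls j : conn ls -> conn (rot j ls).
Proof.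
move=> C r d; rewrite size_rot => Hd.
by rewrite rot_rot_add; apply: C.
Qed.

Lemma take_catl' (T : Type) n (s1 s2 : seq T) : n <= size s1 -> take n (s1 ++ s2) = take n s1.
Proof. by move=> h; rewrite take_cat; case: ltngtP h => // -> _; rewrite subnn take0 cats0 take_size. Qed.
Lemma drop_catl' (T : Type) n (s1 s2 : seq T) : n <= size s1 -> drop n (s1 ++ s2) = drop n s1 ++ s2.
Proof. by move=> h; rewrite drop_cat; case: ltngtP h => // -> _; rewrite subnn drop0 drop_size. Qed.
Lemma take_catr' (T : Type) n (s1 s2 : seq T) : size s1 <= n -> take n (s1 ++ s2) = s1 ++ take (n - size s1) s2.
Proof. by move=> h; rewrite take_cat ltnNge h. Qed.
Lemma drop_catr' (T : Type) n (s1 s2 : seq T) : size s1 <= n -> drop n (s1 ++ s2) = drop (n - size s1) s2.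
Proof. by move=> h; rewrite drop_cat ltnNge h. Qed.

Lemma conn_contract l Q : conn (rcons l Q) -> conn l.
Proof.
move=> C r d Hd.
rewrite (rot_minn r); set r' := minn r (size l).
have r'le : r' <= size l by rewrite geq_minr.
have E1 : rot r' (rcons l Q) = drop r' l ++ Q :: take r' l.
  rewrite /rot -cats1 drop_cat take_cat; case: ltngtP r'le => //= [lt|->] _.
    by rewrite -catA.
  by rewrite subnn drop0 take0 drop_size take_size cats0.
have E2 : rot r' l = drop r' l ++ take r' l by [].
rewrite E2; set X := drop r' l; set Y := take r' l.
have sX : size X = size l - r' by rewrite size_drop.
have C' : forall d', 0 < d' < (size l).+1 -> feas 0 (take d' (drop r' l ++ Q :: take r' l)) || feas 0 (rev (drop d' (drop r' l ++ Q :: take r' l))).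
  move=> d' Hd'; rewrite -E1; apply: C; by rewrite size_rcons.
case/andP: Hd => d0 dn.
case: (leqP d (size X)) => dX.
- have Hd1 : 0 < d < (size l).+1 by rewrite d0 (ltn_trans dn (ltnSn _)).
  have /orP [H|H] := C' d Hd1; apply/orP; [left|right]; move: H.
    by rewrite !take_catl'.
  by rewrite !drop_catl' // !rev_cat rev_cons -cats1 -catA => /feas_rem.
- have Hd1 : 0 < d.+1 < (size l).+1 by rewrite /= ltnS dn.
  have /orP [H|H] := C' d.+1 Hd1; apply/orP; [left|right]; move: H.
    rewrite !take_catr' ?(ltnW dX) ?(leqW (ltnW dX)) //.
    rewrite subSn ?(ltnW dX) //= => /feas_rem.
    by rewrite (_ : d - size X = (d - size X).-1.+1) //; lia.
  rewrite !drop_catr' ?(ltnW dX) ?(leqW (ltnW dX)) //.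
  by rewrite subSn ?(ltnW dX) //=.
Qed.

Lemma rot_rcons_le (T : Type) r (l : seq T) Q : r <= size l ->
  rot r (rcons l Q) = drop r l ++ Q :: take r l.
Proof.
move=> r'le; rewrite /rot -cats1 drop_cat take_cat; case: ltngtP r'le => //= [lt|->] _.
  by rewrite -catA.
by rewrite subnn drop0 take0 drop_size take_size cats0.
Qed.

Lemma rot_rcons (T : Type) k (ls : seq T) x0 : k < size ls ->
  rot k.+1 ls = rcons (drop k.+1 ls ++ take k ls) (nth x0 ls k).
Proof. by move=> h; rewrite /rot (take_nth x0 h) rcons_cat. Qed.

Lemma feas_nth_gt L t i : feas t L -> i < size L -> exists2 w, w \in nth [::] L i & t < w.
Proof.
elim: L t i => [//|Q L IH] t [|i] /= /hasP [z zQ /andP [lt fz]].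
  by move=> _; exists z.
by move=> hi; have [w ? ?] := IH z i fz hi; exists w => //; exact: ltn_trans lt _.
Qed.

Lemma feas_single_order L t i j x y : feas t L -> i < j -> j < size L ->
  nth [::] L i = [:: x] -> nth [::] L j = [:: y] -> x < y.
Proof.
elim: L t i j => [//|Q L IH] t [|i] [|j] //= /hasP [z zQ /andP [lt fz]] ij js.
  move=> Qx; move: zQ; rewrite Qx inE => /eqP zx Ly; subst z.
  by have [w] := feas_nth_gt fz js; rewrite Ly inE => /eqP ->.
by apply: (IH z i j fz)...
Qed.

Lemma count_lemma (l : seq (seq nat)) :
  (forall a, a < size l -> 0 < size (nth [::] l a)) ->
  (forall a b, a < b -> b < size l -> size (nth [::] l a) = 1 -> size (nth [::] l b) = 1 -> False) ->
  (2 * size l).-1 <= sumn (map size l).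
Proof.
elim: l => [//|Q l IH] H1 H2 /=.
have H1' : forall a, a < size l -> 0 < size (nth [::] l a) by move=> a h; exact: (H1 a.+1).
case: (ltngtP (size Q) 1) => hQ.
- by have := H1 0 isT; rewrite /=; lia.
- have := IH H1' (fun a b ab bl => H2 a.+1 b.+1 ab bl); lia.
- suff : 2 * size l <= sumn (map size l) by lia.
  have : forall a, a < size l -> 2 <= size (nth [::] l a).
    move=> a al; have := H1' a al; have /= := H2 0 a.+1 isT al hQ.
    case: (ltngtP (size (nth [::] l a)) 1) => h //; lia.
  elim: (l) => [//|R l' IH2] H /=.
  have := H 0 isT; have := IH2 (fun a h => H a.+1 h); rewrite /=; lia.
Qed.

Lemma conn_path l : conn (rcons l [::]) -> 0 < size l -> (2 * size l).-1 <= sumn (map size l).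
Proof.
move=> C l0; set n := size l.
have seg : forall i j, i < j <= n ->
    feas 0 (take (j - i) (drop i l)) && feas 0 (rev (take (j - i) (drop i l))).
  move=> i j /andP [ij jn]; apply/andP; split.
    have := C i (j - i); rewrite size_rcons rot_rcons_le; last by rewrite (leq_trans (ltnW ij)).
    have -> : 0 < j - i < n.+1 by apply/andP; split; lia.
    move=> /(_ isT) /orP [H|H].
      by move: H; rewrite take_catl' // size_drop; lia.
    by move: H; rewrite drop_catl' ?size_drop; [rewrite rev_cat rev_cons -cats1 -catA /= feas_nil|lia].
  have := C j (n.+1 - (j - i)); rewrite size_rcons rot_rcons_le //.
  have -> : 0 < n.+1 - (j - i) < n.+1 by apply/andP; split; lia.
  move=> /(_ isT) /orP [H|H].
    move: H; rewrite take_catr' ?size_drop; last by lia.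
    by rewrite (_ : n.+1 - (j - i) - (n - j) = (i.+1)) ?feas_nil //; lia.
  move: H; rewrite drop_catr' ?size_drop; last by lia.
  rewrite (_ : n.+1 - (j - i) - (n - j) = i.+1) /=; last by lia.
  by rewrite take_drop subnK // ltnW.
have nthseg : forall i j k, j <= n -> k < j - i -> nth [::] (take (j - i) (drop i l)) k = nth [::] l (i + k).
  by move=> i j k jn kj; rewrite nth_take // nth_drop.
have sizeseg : forall i j, j <= n -> size (take (j - i) (drop i l)) = j - i.
  by move=> i j jn; rewrite size_take size_drop; case: ltnP => //; lia.
have size1 : forall (s : seq nat), size s = 1 -> exists x, s = [:: x].
  by move=> [|x [|? ?]] //= _; exists x.
apply: count_lemma.
  move=> a an; have /andP [H _] := seg a a.+1 (introT andP (conj (ltnSn a) an)).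
  have h0 : 0 < size (take (a.+1 - a) (drop a l)) by rewrite sizeseg // subSnn.
  have [w] := @feas_nth_gt _ _ 0 H h0.
  by rewrite nthseg ?subSnn // addn0; case: (nth [::] l a).
move=> a b ab bn /size1 [x Hx] /size1 [y Hy].
have /andP [H1 H2] := seg a b.+1 (introT andP (conj (leqW ab) bn)).
have xy := @feas_single_order _ _ 0 (b - a) x y H1.
have yx := @feas_single_order _ _ 0 (b - a) y x H2.
move: xy yx; rewrite size_rev sizeseg // !nth_rev ?sizeseg //; try lia.
rewrite !nthseg //; try lia.
rewrite addn0 subnKC ?(ltnW ab) // (_ : b.+1 - a - (b - a).+1 = 0); last by lia.
rewrite (_ : b.+1 - a - 1 = b - a); last by lia.
rewrite addn0 subnKC ?(ltnW ab) // Hx Hy.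
have ba : 0 < b - a by lia.
have ba' : b - a < b.+1 - a by lia.
move=> /(_ ba ba' erefl erefl) xy /(_ ba ba' erefl erefl); lia.
Qed.

Ltac crush := repeat match goal with
  | H : is_true (_ || _) |- _ => case/orP: H => H
  | H : is_true (_ && _) |- _ => case/andP: H => ? H
  | H : is_true false |- _ => discriminate H
  end; lia.
Lemma base1 a b c d e : conn [:: [:: a]; [:: b]; [:: c]; [:: d]; [:: e]] -> False.
Proof.
move=> C.
have := C 0 2 isT; have := C 2 3 isT; have := C 1 2 isT; have := C 3 3 isT.
rewrite /= !orbF !andbT.
intros; crush.
Qed.
Lemma base2 a b c d y z : conn [:: [:: a]; [:: b]; [:: c]; [:: d]; [:: y; z]] -> False.
Proof.
move=> C.
have := C 0 2 isT; have := C 2 3 isT; have := C 1 2 isT; have := C 3 3 isT; have := C 1 3 isT; have := C 4 2 isT.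
rewrite /= !orbF !andbT.
intros; crush.
Qed.

Lemma decomp ls k : k < size ls -> conn ls ->
  let l := drop k.+1 ls ++ take k ls in let Q := nth [::] ls k in
  [/\ conn (rcons l Q), sumn (map size ls) = sumn (map size l) + size Q,
      size l = (size ls).-1 & forall P, all P ls -> all P l /\ P Q].
Proof.
move=> kl C l Q; have R := rot_rcons [::] kl; rewrite -/l -/Q in R; split.
- by rewrite -R; exact: conn_rot.
- by rewrite -(sumn_rot _ k.+1) -map_rot R map_rcons sumn_rcons.
- by have := size_rot k.+1 ls; rewrite R size_rcons => <-.
- move=> P H; have : all P (rot k.+1 ls) by apply/allP => x; rewrite mem_rot; exact: (allP H x).
  by rewrite R all_rcons => /andP [].
Qed.

Lemma sumn_ones (ls : seq (seq nat)) : all (fun Q => size Q == 1) ls -> sumn (map size ls) = size ls.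
Proof. by elim: ls => //= Q ls IH /andP [/eqP -> /IH ->]. Qed.

Theorem lb N : forall ls, 5 <= N -> size ls = N -> conn ls -> 2 * N - 3 <= sumn (map size ls).
Proof.
elim: N => [//|N IH] ls N5 sz C.
case: (boolP (has (fun Q => size Q == 0) ls)) => [/(has_nthP [::]) [k kl /eqP k0]|].
  have [C' -> sl _] := decomp kl C.
  move: C'; rewrite (_ : nth [::] ls k = [::]) ?k0; last by case: (nth [::] ls k) k0.
  move=> /conn_path; rewrite sl sz /= => /(_ _); lia.
rewrite -all_predC => Hne.
have Hne' : all (fun Q => 0 < size Q) ls.
  by apply: sub_all Hne => Q /=; rewrite lt0n.
case: (boolP (has (fun Q => 1 < size Q) ls)) => [/(has_nthP [::]) [k kl k2]|].
  have [C' E sl Hall] := decomp kl C; rewrite sz /= in sl.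
  have [Hl _] := Hall _ Hne'.
  case: (ltngtP N 4) => HN; first by lia.
    have := IH _ HN sl (conn_contract C'); rewrite E; lia.
  rewrite HN in sl sz *; case: (leqP 7 (sumn (map size ls))) => // Hs.
  exfalso; rewrite E in Hs; move: C' Hl Hs k2 sl.
  set l := drop k.+1 ls ++ take k ls; set Q := nth [::] ls k.
  case: l => [|A [|B [|C1 [|D [|? ?]]]]] //= C' Hl Hs k2 _.
  move: Hl; rewrite !andbT => /and4P [hA hB hC hD].
  have : [&& size A == 1, size B == 1, size C1 == 1, size D == 1 & size Q == 2].
    by apply/and5P; split; apply/eqP; lia.
  case/and5P; case: A C' {hA Hs} => [|a [|? ?]] //; case: B {hB} => [|b [|? ?]] //;
    case: C1 {hC} => [|c [|? ?]] //; case: D {hD} => [|d [|? ?]] //; case: Q {k2} => [|y [|z [|? ?]]] //.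
  by move=> /base2.
rewrite -all_predC => H1.
have Hones : all (fun Q => size Q == 1) ls.
  apply/allP => Q QI; have := allP H1 Q QI; have := allP Hne' Q QI => /=; lia.
have kl : 0 < size ls by rewrite sz.
have [C' E sl Hall] := decomp kl C; rewrite sz /= in sl.
have [Hl _] := Hall _ Hones.
case: (ltngtP N 4) => HN; first by lia.
  have := IH _ HN sl (conn_contract C'); rewrite (sumn_ones Hones) sz (sumn_ones Hl) sl; lia.
rewrite HN in sz *; exfalso; move: C Hones; case: ls sz {C' E sl Hall Hl H1 Hne Hne' kl} => [|A [|B [|C1 [|D [|F [|? ?]]]]]] //= _ C.
case: A C => [|a [|? ?]] //; case: B => [|b [|? ?]] //; case: C1 => [|c [|? ?]] //;
  case: D => [|d [|? ?]] //; case: F => [|e [|? ?]] //.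
by move=> /base1.
Qed.

Lemma succ_val N (p : 'I_N) : val (cyc_succ p) = p.+1 %% N.
Proof. by []. Qed.

Lemma succ_inj N (p q : 'I_N) : cyc_succ p = cyc_succ q -> p = q.
Proof.
move/(congr1 val); rewrite !succ_val => /eqP.
rewrite -[p.+1]addn1 -[q.+1]addn1 eqn_modDr !modn_small // => /eqP h.
exact: val_inj.
Qed.

Lemma setdouble (T : finType) (a b c d : T) : [set a; b] = [set c; d] ->
  (a = c /\ b = d) \/ (a = d /\ b = c).
Proof.
move=> E.
have : a \in [set c; d] by rewrite -E !inE eqxx.
have : b \in [set c; d] by rewrite -E !inE eqxx orbT.
have : c \in [set a; b] by rewrite E !inE eqxx.
have : d \in [set a; b] by rewrite E !inE eqxx orbT.
rewrite !inE => /orP [] /eqP h1 /orP [] /eqP h2 /orP [] /eqP h3 /orP [] /eqP h4; subst; auto.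
Qed.

Lemma path_dir N (u : 'I_N) (vs : seq 'I_N) : 2 < N -> uniq (u :: vs) ->
  (forall i, i < size vs -> nth u vs i = cyc_succ (nth u (u :: vs) i) \/
                            nth u (u :: vs) i = cyc_succ (nth u vs i)) ->
  (forall i, i < size vs -> nth u vs i = cyc_succ (nth u (u :: vs) i)) \/
  (forall i, i < size vs -> nth u (u :: vs) i = cyc_succ (nth u vs i)).
Proof.
move=> N2 U H.
set w := fun i => nth u (u :: vs) i.
have wS : forall i, nth u vs i = w i.+1 by [].
have winj : forall i j, i <= size vs -> j <= size vs -> w i = w j -> i = j.
  by move=> i j hi hj /eqP; rewrite /w nth_uniq //= => /eqP.
case: (posnP (size vs)) => [->|s0]; first by left.
have noPQ : forall i, i.+1 < size vs -> w i.+1 = cyc_succ (w i) -> w i.+1 = cyc_succ (w i.+2) -> False.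
  move=> i hi E1 E2; rewrite E1 in E2; have := succ_inj E2 => /winj; lia.
have noQP : forall i, i.+1 < size vs -> w i = cyc_succ (w i.+1) -> w i.+2 = cyc_succ (w i.+1) -> False.
  move=> i hi E1 E2; rewrite -E1 in E2; have := E2 => /winj; lia.
case: (H 0 s0) => h0; [left|right]; rewrite !wS in h0 *.
- elim=> [//|i IH] hi; case: (H i.+1 hi); rewrite !wS // => h.
  by exfalso; apply: (noPQ i hi (IH (ltnW hi)) h).
- elim=> [//|i IH] hi; case: (H i.+1 hi); rewrite !wS // => h.
  by exfalso; apply: (noQP i hi (IH (ltnW hi)) h).
Qed.

Section Conv.
Variables (N T : nat) (E : time_edges 'I_N T).
Hypothesis N2 : 2 < N.
Hypothesis Esub : forall et, et \in E -> exists p : 'I_N, et.1 = [set p; cyc_succ p].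

Definition lab (p : 'I_N) : seq nat :=
  [seq (val t).+1 | t <- enum 'I_T.+1 & (([set p; cyc_succ p], t) \in E)].
Definition lsE := map lab (enum 'I_N).

Lemma size_lsE : size lsE = N.
Proof. by rewrite size_map size_enum_ord. Qed.

Lemma nth_lsE (q : 'I_N) : nth [::] lsE q = lab q.
Proof.
rewrite (nth_map q) ?size_enum_ord //; congr lab; apply: val_inj => /=.
by rewrite nth_enum_ord.
Qed.

Lemma succ2 (p : 'I_N) : cyc_succ (cyc_succ p) != p.
Proof.
apply/negP => /eqP /(congr1 (@nat_of_ord N)); rewrite !succ_val.
move: (ltn_ord p); set q := nat_of_ord p => qN.
case: (ltngtP q.+1 N) => h.
- rewrite (modn_small h); case: (ltngtP q.+2 N) => h2.
  + rewrite (modn_small h2); lia.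
  + lia.
  + rewrite h2 modnn; lia.
- lia.
- rewrite h modnn modn_small; lia.
Qed.

Definition phi (x : 'I_N * 'I_T.+1) : {set 'I_N} * 'I_T.+1 := ([set x.1; cyc_succ x.1], x.2).

Lemma phi_inj : injective phi.
Proof.
move=> [p t] [q t'] [/setdouble [[-> _]|[E1 E2]] ->] //.
by move: (succ2 q); rewrite -E1 E2 eqxx.
Qed.

Lemma card_lsE : #|E| = sumn (map size lsE).
Proof.
set F := [set x | phi x \in E].
have EF : E = phi @: F.
  apply/setP => et; apply/idP/imsetP.
    move=> etE; have [p Hp] := Esub etE; exists (p, et.2); first by rewrite inE /phi /= -Hp -surjective_pairing.
    by rewrite /phi /= -Hp -surjective_pairing.
  by move=> [x]; rewrite inE => ? ->.
rewrite EF card_imset; last exact: phi_inj.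
rewrite sumnE big_map /lsE big_map big_enum /= -sum1_card.
rewrite (eq_bigl (fun x => true && (x.2 \in [pred t | phi (x.1, t) \in E]))); last first.
  by move=> [p t]; rewrite /= inE.
rewrite -(pair_big_dep predT (fun p => [pred t | phi (p, t) \in E]) (fun _ _ => 1)) /=.
apply: eq_bigr => p _; rewrite sum1_card size_map size_filter enumT cardE /enum_mem size_filter.
by apply: eq_count => t; rewrite !inE.
Qed.
End Conv.

Lemma feas_witness l ts t : size ts = size l -> sorted ltn ts ->
  (forall i, i < size l -> nth 0 ts i \in nth [::] l i) ->
  (forall x, x \in ts -> t < x) -> feas t l.
Proof.
elim: l ts t => [//|Q l IH] [//|x ts] t /= [sz] st Hm Hx.
apply/hasP; exists x; first exact: (Hm 0).
rewrite Hx ?mem_head //=; apply: (IH ts) => //.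
- exact: path_sorted st.
- by move=> i hi; exact: (Hm i.+1).
- by move=> y yts; have := order_path_min ltn_trans st => /allP; apply.
Qed.

Lemma nth_rot' (T : Type) (x0 : T) r (s : seq T) i : r < size s -> i < size s ->
  nth x0 (rot r s) i = nth x0 s ((r + i) %% size s).
Proof.
move=> rs hi0; rewrite /rot nth_cat size_drop.
case: ltnP => h.
  by rewrite nth_drop modn_small //; lia.
rewrite nth_take; last by lia.
have -> : r + i = (r + i - size s) + size s by lia.
by rewrite modnDr modn_small; [congr nth; lia | lia].
Qed.

Lemma mod_back N x j r : x < N -> j <= N -> (x + j) %% N = r -> x = (r + (N - j)) %% N.
Proof.
move=> xN jN <-; rewrite modnDml -addnA subnKC // modnDr modn_small //.
Qed.

Lemma modlt2 N x : N <= x -> x < N + N -> x %% N = x - N.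
Proof.
move=> h1 h2; have -> : x = (x - N) + N by lia.
by rewrite modnDr modn_small; lia.
Qed.

Section Conn.
Variables (N T : nat) (E : time_edges 'I_N T).
Hypothesis N2 : 2 < N.
Hypothesis Esub : forall et, et \in E -> exists p : 'I_N, et.1 = [set p; cyc_succ p].

Lemma lab_mem (p : 'I_N) (t : 'I_T.+1) : ([set p; cyc_succ p], t) \in E -> (val t).+1 \in lab E p.
Proof. by move=> h; apply: map_f; rewrite mem_filter h mem_enum. Qed.

Lemma conn_lsE : strictly_temporally_connected E -> conn (lsE E).
Proof.
move=> Hc r d; rewrite size_lsE => /andP [d0 dN].
have N0 : 0 < N by lia.
wlog rN : r / r < N.
  move=> W; case: (ltnP r N) => h; first exact: W.
  by rewrite rot_oversize ?size_lsE //; have := W 0 N0; rewrite rot0.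
set u : 'I_N := Ordinal rN.
set v : 'I_N := Ordinal (ltn_pmod (r + d) N0).
have uv : u != v.
  apply/negP => /eqP /(congr1 (@nat_of_ord N)) /=.
  case: (ltnP (r + d) N) => h; first by rewrite modn_small //; lia.
  rewrite modlt2 //; lia.
have [vs [ts [Hsz Hu Hl Hs Hm]]] := Hc u v uv.
set w := fun i => nth u (u :: vs) i.
have step : forall i, i < size vs -> nth u vs i = cyc_succ (w i) \/ w i = cyc_succ (nth u vs i).
  move=> i hi; rewrite /w; have [p Hp] := Esub (Hm i hi); move: Hp => /= /setdouble [[-> ->]|[-> ->]]; auto.
have svN : size vs < N.
  have := uniq_leq_size Hu (fun x _ => mem_enum _ x); rewrite size_enum_ord /=; lia.
have sv0 : 0 < size vs.
  by case: (vs) Hl uv => // /= ->; rewrite eqxx.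
have Hv : w (size vs) = v by rewrite /w -last_nth.
have lsw : forall i j, (val (w i)) = j %% N -> nth [::] (lsE E) (j %% N) = lab E (w i).
  by move=> i j <-; rewrite nth_lsE.
have rotn : forall i, i < N -> nth [::] (rot r (lsE E)) i = nth [::] (lsE E) ((r + i) %% N).
  by move=> i iN; rewrite nth_rot' size_lsE.
have tsmap : forall i, i < size vs -> nth 0 (map (fun t : 'I_T.+1 => (val t).+1) ts) i = (val (nth ord0 ts i)).+1.
  by move=> i hi; rewrite (nth_map ord0) // Hsz.
have tssort : sorted ltn (map (fun t : 'I_T.+1 => (val t).+1) ts).
  by move: Hs; rewrite !sorted_map.
case: (path_dir N2 Hu step) => [P|Q].
-
  have pos : forall i, i <= size vs -> val (w i) = (r + i) %% N.
    elim=> [_|i IH hi]; first by rewrite /w /= addn0 modn_small.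
    rewrite -[w i.+1]/(nth u vs i) P // succ_val IH ?(ltnW hi) //.
    by rewrite -addn1 modnDml addn1 addnS.
  have sd : size vs = d.
    have := pos _ (leqnn _); rewrite Hv /= => /eqP; rewrite eq_sym eqn_modDl !modn_small //.
    by move/eqP.
  apply/orP; left; apply: (feas_witness (ts := map (fun t : 'I_T.+1 => (val t).+1) ts)) => //.
  + by rewrite size_map size_takel ?size_rot ?size_lsE ?Hsz //; lia.
  + move=> i; rewrite size_takel ?size_rot ?size_lsE; last by lia.
    move=> hi; rewrite nth_take // rotn; last by lia.
    rewrite (lsw i) ?pos ?tsmap //; try lia.
    have hi' : i < size vs by lia.
    by apply: lab_mem; rewrite -(P i hi'); exact: Hm.
  + by move=> x /mapP [t _ ->].
-
  have pos : forall i, i <= size vs -> (val (w i) + i) %% N = r.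
    elim=> [_|i IH hi]; first by rewrite /w /= addn0 modn_small.
    rewrite -IH ?(ltnW hi) // /w (Q i hi) succ_val modnDml.
    by rewrite addSnnS.
  have sd : size vs = N - d.
    have := pos _ (leqnn _); rewrite Hv /= modnDml.
    case: (ltnP (r + d + size vs) N) => h1.
      by rewrite modn_small //; lia.
    case: (ltnP (r + d + size vs) (N + N)) => h2.
      rewrite modlt2 //; move: h1 h2 dN; move: (size vs) => e; lia.
    have -> : r + d + size vs = (r + d + size vs - N - N) + N + N by lia.
    by rewrite !modnDr modn_small; lia.
  apply/orP; right; apply: (feas_witness (ts := map (fun t : 'I_T.+1 => (val t).+1) ts)) => //.
  + by rewrite size_map size_rev size_drop size_rot size_lsE Hsz sd.
  + move=> i; rewrite size_rev size_drop size_rot size_lsE => hi.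
    rewrite nth_rev ?size_drop ?size_rot ?size_lsE // nth_drop rotn; last by lia.
    have hi1 : i.+1 <= size vs by rewrite sd.
    have iN : i.+1 <= N by lia.
    have hw := pos i.+1 hi1.
    have E2 := mod_back (ltn_ord (w i.+1)) iN hw.
    have E1 : (r + (d + (N - d - i.+1))) = r + (N - i.+1) by lia.
    rewrite E1 -E2 nth_lsE tsmap //.
    apply: lab_mem; have := Hm i hi1.
    by rewrite (Q i hi1) setUC.
  + by move=> x /mapP [t _ ->].
Qed.
End Conn.

Lemma last_iota m k : last m (iota m.+1 k) = m + k.
Proof. by elim: k m => [|k IH] m /=; rewrite ?addn0 // IH addSnnS. Qed.

Lemma sorted_iota_mono (f : nat -> nat) a k :
  (forall i, a <= i -> i.+1 < a + k -> f i < f i.+1) -> sorted ltn (map f (iota a k)).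
Proof.
elim: k a => [//|k IH] a H /=.
case: k IH H => [//|k] IH H /=.
rewrite H ?leqnn //; last by lia.
apply: IH => i h1 h2; apply: H; lia.
Qed.

Lemma mk_path (V : finType) T (E : time_edges V T) (u v : V) (g : nat -> V)
  (lab : nat -> 'I_T.+1) k :
  g 0 = u -> g k = v -> (forall a b, a <= k -> b <= k -> g a = g b -> a = b) ->
  (forall i, i.+1 < k -> lab i < lab i.+1) ->
  (forall i, i < k -> ([set g i; g i.+1], lab i) \in E) ->
  strict_temporal_path E u v.
Proof.
move=> g0 gk ginj lmono Hm.
exists (map g (iota 1 k)), (map lab (iota 0 k)).
have W : u :: map g (iota 1 k) = map g (iota 0 k.+1) by rewrite /= g0.
split.
- by rewrite !size_map !size_iota.
- rewrite W map_inj_in_uniq ?iota_uniq // => a b; rewrite !mem_iota /= !add0n => ha hb.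
  by apply: ginj; lia.
- by rewrite -g0 last_map last_iota.
- rewrite -map_comp; apply: sorted_iota_mono => i _; rewrite add0n /= => h; exact: lmono.
- move=> i; rewrite size_map size_iota => hi.
  rewrite W !(nth_map 0) ?size_iota //; last by lia.
  by rewrite !nth_iota //; try lia; rewrite add0n add1n; apply: Hm.
Qed.

Lemma half3 x : 3 * (2 * x) %/ 2 = 3 * x.
Proof. by rewrite mulnCA mulKn. Qed.

Section Constr.
Variables (k n m2 s2 : nat).
Hypothesis s2pos : 0 < s2.
Hypothesis s2m2 : s2 <= m2.

Local Notation N := (3 * (2 * s2)).
Local Notation TT := (cycT k n (2 * m2)).
Local Notation h := (3 * s2).
Local Notation K := (4 * k * n).
Local Notation B0 := (3 * m2 + K + 5).

Lemma N0 : 0 < N. Proof. lia. Qed.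

Definition vt (i : nat) : 'I_N := Ordinal (ltn_pmod i N0).

Lemma vt_val i : i < N -> val (vt i) = i.
Proof. by move=> h; rewrite /= modn_small. Qed.

Definition up i := if i < h.-1 then 5 + i else if i == h.-1 then h + 4 else B0 + (i - h).
Definition dn i := if h <= i then 5 + (N - 2 - i) else if i == h.-1 then h + 4 else B0 + (h - 2 - i).

Lemma TT_eq : TT = 6 * m2 + K + 4.
Proof. rewrite /cycT; lia. Qed.

Lemma up_bound i : i < N.-1 -> up i < TT.+1.
Proof. rewrite TT_eq /up; case: ifP => _; [lia|case: ifP => _; lia]. Qed.
Lemma dn_bound i : i < N.-1 -> dn i < TT.+1.
Proof. rewrite TT_eq /dn; case: ifP => _; [lia|case: ifP => _; lia]. Qed.

Lemma up_mono i : i.+1 < N.-1 -> up i < up i.+1.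
Proof.
rewrite /up; case: ifP => h1; case: ifP => h2; try case: ifP => h3; try case: ifP => h4; try lia.
all: move: h1 h2 h3 h4 => /=; try lia.
Qed.

Lemma dn_mono i : i.+1 < N.-1 -> dn i.+1 < dn i.
Proof.
rewrite /dn; case: ifP => h1; case: ifP => h2; try case: ifP => h3; try case: ifP => h4; try lia.
all: move: h1 h2 h3 h4 => /=; try lia.
Qed.

Lemma up_dn i : i < N.-1 -> up i = dn i -> i = h.-1.
Proof.
rewrite /up /dn; case: ifP => h1; case: ifP => h2; try case: ifP => h3; try case: ifP => h4; try lia.
all: move: h1 h2 h3 h4 => /=; try lia.
Qed.

Lemma up_range i : i < N.-1 -> in_Ldown (2 * s2) (up i) || in_Lup k n (2 * m2) (2 * s2) (up i).
Proof.
rewrite /in_Ldown /in_Lup !half3 /up => hi.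
case: ifP => h1; [|case: ifP => h2]; apply/orP; [left|left|right]; apply/andP; split; lia.
Qed.

Lemma dn_range i : i < N.-1 -> in_Ldown (2 * s2) (dn i) || in_Lup k n (2 * m2) (2 * s2) (dn i).
Proof.
rewrite /in_Ldown /in_Lup !half3 /dn => hi.
case: ifP => h1; [|case: ifP => h2]; apply/orP; [left|left|right]; apply/andP; split; lia.
Qed.

Definition edge i : {set 'I_N} := [set vt i; vt i.+1].
Definition f1 i : {set 'I_N} * 'I_TT.+1 := (edge i, inord (up i)).
Definition f2 i : {set 'I_N} * 'I_TT.+1 := (edge i, inord (dn i)).
Definition A := [set f1 (nat_of_ord i) | i : 'I_N.-1].
Definition B := [set f2 (nat_of_ord i) | i in [set i : 'I_N.-1 | nat_of_ord i != h.-1]].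
Definition Esp := A :|: B.

Lemma edge_inj i j : i < N.-1 -> j < N.-1 -> edge i = edge j -> i = j.
Proof.
move=> hi hj /setdouble [[/(congr1 val) E1 _]|[/(congr1 val) E1 /(congr1 val) E2]].
  by move: E1; rewrite !vt_val //; lia.
by move: E1 E2; rewrite !vt_val //; lia.
Qed.

Lemma vt_succ i : i < N.-1 -> vt i.+1 = cyc_succ (vt i).
Proof. move=> hi; apply: val_inj; rewrite succ_val !vt_val ?modn_small //; lia. Qed.

Lemma Esp_sub : Esp \subset cycleE k n (2 * m2) (2 * s2).
Proof.
apply/subsetP => et; rewrite /Esp inE => /orP [/imsetP [i _ ->]|/imsetP [i _ ->]];
  rewrite inE /=; apply/andP; split.
- by apply/existsP; exists (vt i); rewrite /edge vt_succ.
- by rewrite inordK ?up_range ?up_bound.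
- by apply/existsP; exists (vt i); rewrite /edge vt_succ.
- by rewrite inordK ?dn_range ?dn_bound.
Qed.

Lemma Esp_card : #|Esp| = 6 * (2 * s2) - 3.
Proof.
have cA : #|A| = N.-1.
  rewrite card_imset ?card_ord // => i j /(congr1 fst) /= /edge_inj E.
  by apply: val_inj; apply: E.
have hh : h.-1 < N.-1 by lia.
pose i0 : 'I_N.-1 := Ordinal hh.
have cB : #|B| = N.-2.
  rewrite card_imset; last first.
    by move=> i j /(congr1 fst) /= /edge_inj E; apply: val_inj; apply: E.
  rewrite (_ : [set i : 'I_N.-1 | nat_of_ord i != h.-1] = [set~ i0]).
    by rewrite cardsC1 card_ord.
  by apply/setP => i; rewrite !inE; congr negb; apply/eqP/eqP => [h1|->//]; apply: val_inj.
have cAB : A :&: B = set0.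
  apply/setP => et; rewrite !inE; apply/negP => /andP [/imsetP [i _ ->] /imsetP [j]].
  rewrite inE => hj [/edge_inj E]; have ij : nat_of_ord i = j by apply: E.
  move/(congr1 (@nat_of_ord _)); rewrite !inordK ?up_bound ?dn_bound // ij => /up_dn.
  by move=> /(_ (ltn_ord j)) /eqP; rewrite (negbTE hj).
rewrite /Esp cardsU cA cB cAB cards0; lia.
Qed.

Lemma f1_in i : i < N.-1 -> f1 i \in Esp.
Proof. by move=> hi; rewrite /Esp inE; apply/orP; left; apply/imsetP; exists (Ordinal hi). Qed.

Lemma f2_in i : i < N.-1 -> f2 i \in Esp.
Proof.
move=> hi; case: (eqVneq i h.-1) => [e|ne].
  rewrite (_ : f2 i = f1 i); first exact: f1_in.
  by rewrite /f1 /f2 /up /dn e ltnn eqxx (_ : h <= h.-1 = false) //; lia.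
rewrite /Esp inE; apply/orP; right; apply/imsetP; exists (Ordinal hi) => //.
by rewrite inE.
Qed.

Lemma Esp_conn : strictly_temporally_connected Esp.
Proof.
move=> u v; case: (ltngtP u v) => [uv|vu|e]; last by move=> /negP []; apply/eqP; apply: val_inj.
- move=> _.
  have vN := ltn_ord v.
  apply: (@mk_path _ _ _ u v (fun j => vt (u + j)) (fun j => inord (up (u + j))) (v - u)).
  + by apply: val_inj; rewrite addn0 vt_val.
  + by apply: val_inj => /=; rewrite modn_small; lia.
  + move=> a b ha hb /(congr1 val); rewrite !vt_val; lia.
  + move=> i hi; rewrite !inordK ?up_bound; try lia.
    rewrite addnS up_mono; lia.
  + move=> i hi; have -> : vt (u + i.+1) = vt (u + i).+1 by rewrite addnS.
    apply: f1_in; lia.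
- move=> _.
  have uN := ltn_ord u.
  apply: (@mk_path _ _ _ u v (fun j => vt (u - j)) (fun j => inord (dn (u - j.+1))) (u - v)).
  + by apply: val_inj; rewrite subn0 vt_val.
  + by apply: val_inj => /=; rewrite modn_small; lia.
  + move=> a b ha hb /(congr1 val); rewrite !vt_val; lia.
  + move=> i hi; rewrite !inordK ?dn_bound; try lia.
    have -> : u - i.+1 = (u - i.+2).+1 by lia.
    by rewrite dn_mono; lia.
  + move=> i hi; rewrite (_ : [set vt (u - i); vt (u - i.+1)] = edge (u - i.+1)).
      by apply: f2_in; lia.
    by rewrite /edge setUC (_ : (u - i.+1).+1 = u - i) //; lia.
Qed.
End Constr.


Theorem lemma16 (k n m s : nat) :
  0 < k -> 0 < n -> 0 < m -> ~~ odd m ->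
  ~~ odd s -> 2 <= s -> s <= m ->
  (exists E' : time_edges 'I_(3 * s) (cycT k n m),
      strict_temporal_spanner (cycleE k n m s) E' /\ #|E'| = 6 * s - 3) /\
  (forall E' : time_edges 'I_(3 * s) (cycT k n m),
      strict_temporal_spanner (cycleE k n m s) E' -> 6 * s - 3 <= #|E'|).
Proof.
move=> k0 n0 m0 mev sev s2 sm.
have [s' Es] : exists s', s = 2 * s'.
  by exists s./2; rewrite -{1}(odd_double_half s) (negbTE sev) add0n -mul2n.
have [m' Em] : exists m', m = 2 * m'.
  by exists m./2; rewrite -{1}(odd_double_half m) (negbTE mev) add0n -mul2n.
subst s m.
have s'pos : 0 < s' by lia.
have s'm' : s' <= m' by lia.
split.
  exists (@Esp k n m' s' s'pos s'm'); split; last exact: Esp_card.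
  by split; [exact: Esp_sub | exact: Esp_conn].
move=> E' [Hsub Hconn].
have N2 : 2 < 3 * (2 * s') by lia.
have Esub : forall et, et \in E' -> exists p : 'I_(3 * (2 * s')), et.1 = [set p; cyc_succ p].
  move=> et /(subsetP Hsub); rewrite inE => /andP [/existsP [p /eqP ->] _]; by exists p.
rewrite (card_lsE N2 Esub).
have := lb (ls := lsE E') (_ : 5 <= 3 * (2 * s')) (size_lsE E') (conn_lsE N2 Esub Hconn).
by move=> /(_ ltac:(lia)); lia.
Qed.
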